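(* Let $X\subseteq[0,1]^n$ be closed and suppose $X$ has a rationally outgoing $k$-tangent $u$ at $x$, witnessed by a rational simplex $S\subseteq[0,1]^n$, a face $F$ of $S$ and $\lambda\in\mathbb{R}^k_{>0}$ with $C_{x,u,\lambda}\subseteq S$, $C_{x,u,\lambda}\not\subseteq F$, $F\cap X=S\cap X$. Let $f,g\in\mathcal{M}([0,1]^n)$ satisfy $f^{-1}(0)=F$ and $g^{-1}(0)=S$. Then $f|_X$ and $g|_X$ have the same zero set in $X$ (so $f|_X$ lies in a given maximal ideal of $\mathcal{M}(X)$ iff $g|_X$ does), but $f|_X$ does not belong to the principal ideal of $\mathcal{M}(X)$ generated by $g|_X$; i.e., there is no integer $m>0$ with $f|_X\le m\,g|_X$. Consequently $\mathcal{M}(X)$ is not strongly semisimple.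
   Context: $\mathcal{M}([0,1]^n)$ denotes the MV-algebra of continuous functions $[0,1]^n\to[0,1]$ that are piecewise affine linear with finitely many pieces having integer coefficients, with pointwise MV-operations; $\mathcal{M}(X)$ is the MV-algebra of their restrictions to $X$. The principal ideal generated by $a$ is $\{b\mid b\le ma\text{ for some integer }m>0\}$ ($ma$ is the $m$-fold truncated sum). Maximal ideals of $\mathcal{M}(X)$ are exactly $\{h\mid h(y)=0\}$, $y\in X$. Strong semisimplicity: every principal ideal is an intersection of maximal ideals. $k$-tangents: For pairwise orthogonal unit vectors $u=(u_1,\ldots,u_k)$ in $\mathbb{R}^n$, $\mathsf p_l$ the orthogonal projection onto $\mathbb{R}u_1+\cdots+\mathbb{R}u_l$ ($\mathsf p_0=0$), $u$ is a $k$-tangent of $X$ at $x$ if there is a sequence $x_i\in X$, $x_i\to x$, with $x_i-x\notin\mathbb{R}u_1+\cdots+\mathbb{R}u_k$, and $\lim_i \dfrac{x_i-x-\mathsf{p}_{l-1}(x_i-x)}{\|x_i-x-\mathsf{p}_{l-1}(x_i-x)\|}=u_l$ for $l=1,\ldots,k$. $C_{x,u,\lambda}=\mathrm{conv}(x,\,x+\lambda_1u_1,\,\ldots,\,x+\lambda_1u_1+\cdots+\lambda_ku_k)$. Rationally outgoing: there exist a rational simplex $S$, a face $F$ of $S$, and $\lambda\in\mathbb{R}^k_{>0}$ with $C_{x,u,\lambda}\subseteq S$, $C_{x,u,\lambda}\not\subseteq F$, $F\cap X=S\cap X$. *)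

(* Defs.v *)
From mathcomp Require Import all_boot.
From Stdlib Require Import Reals.

Set Implicit Arguments.
Unset Strict Implicit.
Unset Printing Implicit Defensive.

Open Scope R_scope.

Definition vec (n : nat) := 'I_n -> R.

Definition sumI (m : nat) (c : 'I_m -> R) : R :=
  foldr Rplus 0 (map c (enum 'I_m)).

Definition vadd n (a b : vec n) : vec n := fun i => a i + b i.
Definition vsub n (a b : vec n) : vec n := fun i => a i - b i.
Definition vscale n (r : R) (a : vec n) : vec n := fun i => r * a i.
Definition vzero n : vec n := fun _ => 0.
Definition dot n (a b : vec n) : R := sumI (fun i => a i * b i).
Definition norm n (a : vec n) : R := sqrt (dot a a).

Definition lincomb n m (c : 'I_m -> R) (P : 'I_m -> vec n) : vec n :=
  fun i => sumI (fun j => c j * P j i).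

Definition inCube n (x : vec n) : Prop := forall i, 0 <= x i <= 1.

Definition vconv n (a : nat -> vec n) (b : vec n) : Prop :=
  Un_cv (fun i => norm (vsub (a i) b)) 0.

Definition vclosed n (X : vec n -> Prop) : Prop :=
  forall (a : nat -> vec n) (b : vec n), (forall i, X (a i)) -> vconv a b -> X b.

Definition conv_on n m (A : 'I_m -> bool) (P : 'I_m -> vec n) : vec n -> Prop :=
  fun y => exists c : 'I_m -> R,
    (forall j, 0 <= c j) /\ (forall j, A j = false -> c j = 0) /\
    sumI c = 1 /\ y = lincomb c P.

Definition conv n m (P : 'I_m -> vec n) : vec n -> Prop :=
  conv_on (fun _ => true) P.

Definition is_rational (r : R) : Prop :=
  exists p q : Z, (0 < q)%Z /\ r = IZR p / IZR q.
Definition rational_pt n (v : vec n) : Prop := forall i, is_rational (v i).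

Definition aff_indep n m (V : 'I_m -> vec n) : Prop :=
  forall c : 'I_m -> R, sumI c = 0 -> lincomb c V = @vzero n -> forall j, c j = 0.

(* V : 'I_d.+1 -> vec n is the vertex family of a rational simplex conv V;
   its faces are conv_on A V for nonempty A. *)
Definition rational_simplex n d (V : 'I_d.+1 -> vec n) : Prop :=
  (forall j, rational_pt (V j)) /\ aff_indep V.

Definition vsubset n (A B : vec n -> Prop) : Prop := forall y, A y -> B y.

Definition orthonormal n k (u : 'I_k -> vec n) : Prop :=
  forall j l, dot (u j) (u l) = if j == l then 1 else 0.

Definition in_span n k (u : 'I_k -> vec n) (y : vec n) : Prop :=
  exists c : 'I_k -> R, y = lincomb c u.

(* orthogonal projection onto R u_1 + ... + R u_l  (0-based: the u_j with j < l),
   for orthonormal u:  p_l(y) = sum_{j<l} <y,u_j> u_j *)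
Definition proj n k (u : 'I_k -> vec n) (l : nat) (y : vec n) : vec n :=
  lincomb (fun j : 'I_k => if ltn (nat_of_ord j) l then dot y (u j) else 0) u.

Definition normalize n (y : vec n) : vec n := vscale (/ norm y) y.

(* u is a k-tangent of X at x.  Index l : 'I_k (0-based) corresponds to the
   paper's l+1, so p_{(l+1)-1} = proj u l. *)
Definition k_tangent n k (X : vec n -> Prop) (u : 'I_k -> vec n) (x : vec n) : Prop :=
  orthonormal u /\
  exists xs : nat -> vec n,
    (forall i, X (xs i)) /\ vconv xs x /\
    (forall i, ~ in_span u (vsub (xs i) x)) /\
    (forall l : 'I_k,
       vconv (fun i => normalize (vsub (vsub (xs i) x) (proj u l (vsub (xs i) x))))
             (u l)).

(* C_{x,u,lambda} = conv(x, x + l_1 u_1, ..., x + l_1 u_1 + ... + l_k u_k) *)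
Definition Cpts n k (x : vec n) (u : 'I_k -> vec n) (lam : 'I_k -> R)
  : 'I_k.+1 -> vec n :=
  fun j => vadd x (lincomb (fun l : 'I_k =>
                              if ltn (nat_of_ord l) (nat_of_ord j) then lam l else 0) u).

Definition Cset n k (x : vec n) (u : 'I_k -> vec n) (lam : 'I_k -> R) : vec n -> Prop :=
  conv (Cpts x u lam).

Definition aff_eval n (p : ('I_n -> Z) * Z) (x : vec n) : R :=
  sumI (fun i => IZR (p.1 i) * x i) + IZR p.2.

(* f : [0,1]^n -> [0,1] continuous, piecewise affine linear with finitely
   many integer-coefficient pieces (values outside the cube are irrelevant). *)
Definition McNaughton n (f : vec n -> R) : Prop :=
  (forall x, inCube x -> 0 <= f x <= 1) /\
  (forall x, inCube x -> forall eps, 0 < eps -> exists delta, 0 < delta /\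
     forall y, inCube y -> norm (vsub y x) < delta -> Rabs (f y - f x) < eps) /\
  (exists ps : list (('I_n -> Z) * Z),
     forall x, inCube x -> exists p, List.In p ps /\ f x = aff_eval p x).

(* truncated sum and m-fold truncated sum in the MV-algebra [0,1] *)
Definition oplus (a b : R) : R := Rmin 1 (a + b).
Fixpoint mvmul (m : nat) (a : R) : R :=
  match m with
  | O => 0
  | S m' => oplus (mvmul m' a) a
  end.

(* Elements of M(X) are the restrictions to X of McNaughton functions;
   h|_X belongs to the principal ideal of M(X) generated by a|_X. *)
Definition in_principal n (X : vec n -> Prop) (a h : vec n -> R) : Prop :=
  exists m : nat, ltn 0%nat m /\ forall y, X y -> h y <= mvmul m (a y).

(* Maximal ideals of M(X) are {h | h(y) = 0}, y in X; an intersection of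
   maximal ideals is {h | h(y) = 0 for all y in Y} for some Y vsubset of X.
   Strong semisimplicity: every principal ideal is such an intersection. *)
Definition strongly_semisimple n (X : vec n -> Prop) : Prop :=
  forall a, McNaughton a ->
    exists Y : vec n -> Prop, vsubset Y X /\
      forall h, McNaughton h -> (in_principal X a h <-> forall y, Y y -> h y = 0).

(* Main.v *)
From HB Require Import structures.
From mathcomp Require Import all_boot.
From Stdlib Require Import Reals Lra Psatz Rsqrt_def FunctionalExtensionality Classical ClassicalEpsilon.
Require Import Defs.
Set Implicit Arguments.
Unset Strict Implicit.
Unset Printing Implicit Defensive.
Open Scope R_scope.

Lemma RplusA : associative Rplus. Proof. move=> a b c; lra. Qed.
HB.instance Definition _ := Monoid.isComLaw.Build R 0 Rplus RplusA Rplus_comm Rplus_0_l.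

Lemma sumIE m (c : 'I_m -> R) : sumI c = \big[Rplus/0]_(i < m) c i.
Proof. by rewrite /sumI foldrE big_map big_enum. Qed.


Lemma sum_scal m r (F : 'I_m -> R) : \big[Rplus/0]_(i < m) (r * F i) = r * \big[Rplus/0]_(i < m) F i.
Proof.
apply: (big_ind2 (fun a b => a = r * b)); first by rewrite Rmult_0_r.
- by move=> ? ? ? ? -> ->; ring.
- by [].
Qed.

Lemma sum_add m (F G : 'I_m -> R) : \big[Rplus/0]_(i < m) (F i + G i) =
  \big[Rplus/0]_(i < m) F i + \big[Rplus/0]_(i < m) G i.
Proof. by rewrite big_split. Qed.

Lemma sum_le m (F G : 'I_m -> R) : (forall i, F i <= G i) ->
  \big[Rplus/0]_(i < m) F i <= \big[Rplus/0]_(i < m) G i.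
Proof.
move=> H; apply: (big_ind2 (fun a b => a <= b)); first lra.
- by move=> ? ? ? ? ? ?; lra.
- by move=> i _; apply: H.
Qed.

Lemma sum_abs m (F : 'I_m -> R) : Rabs (\big[Rplus/0]_(i < m) F i) <= \big[Rplus/0]_(i < m) Rabs (F i).
Proof.
apply: (big_ind2 (fun a b => Rabs a <= b)); first by rewrite Rabs_R0; lra.
- move=> x1 x2 y1 y2 h1 h2; have := Rabs_triang x1 y1; lra.
- by move=> i _; lra.
Qed.

Lemma sum_ge0 m (F : 'I_m -> R) : (forall i, 0 <= F i) -> 0 <= \big[Rplus/0]_(i < m) F i.
Proof.
move=> H; apply: (big_ind (fun a => 0 <= a)); first lra.
- by move=> ? ? ? ?; lra.
- by move=> i _; apply: H.
Qed.

Lemma sum_pick m (F : 'I_m -> R) j : \big[Rplus/0]_(i < m) F i =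
  F j + \big[Rplus/0]_(i < m) (if i == j then 0 else F i).
Proof.
rewrite (bigD1 j) //=; congr Rplus.
rewrite [in RHS](bigD1 j) //= eqxx Rplus_0_l.
by apply: eq_bigr => i /negbTE ->.
Qed.

Lemma sum_zero m (F : 'I_m -> R) : (forall i, F i = 0) -> \big[Rplus/0]_(i < m) F i = 0.
Proof. by move=> H; rewrite big1. Qed.


Lemma sum_const m b : \big[Rplus/0]_(i < m) b = INR m * b.
Proof.
elim: m => [|p IH]; first by rewrite big_ord0 /=; lra.
rewrite big_ord_recr IH S_INR /=. lra.
Qed.

Lemma sum_const_le m (F : 'I_m -> R) b : (forall i, F i <= b) ->
  \big[Rplus/0]_(i < m) F i <= INR m * b.
Proof. move=> H; rewrite -sum_const; exact: sum_le. Qed.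

Lemma dotE n (a b : vec n) : dot a b = \big[Rplus/0]_(i < n) (a i * b i).
Proof. by rewrite /dot sumIE. Qed.

Lemma dotC n (a b : vec n) : dot a b = dot b a.
Proof. rewrite !dotE; apply: eq_bigr => i _; ring. Qed.

Lemma dot_add n (a b c : vec n) : dot (vadd a b) c = dot a c + dot b c.
Proof. rewrite !dotE -sum_add; apply: eq_bigr => i _; rewrite /vadd; ring. Qed.

Lemma dot_sub n (a b c : vec n) : dot (vsub a b) c = dot a c - dot b c.
Proof.
rewrite !dotE.
rewrite (eq_bigr (fun i => a i * c i + (-1) * (b i * c i))); last by move=> i _; rewrite /vsub; ring.
rewrite sum_add sum_scal; ring. Qed.

Lemma dot_scale n r (a c : vec n) : dot (vscale r a) c = r * dot a c.
Proof. rewrite !dotE -sum_scal; apply: eq_bigr => i _; rewrite /vscale; ring. Qed.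

Lemma dot_lincomb n m (c : 'I_m -> R) (P : 'I_m -> vec n) b :
  dot (lincomb c P) b = \big[Rplus/0]_(j < m) (c j * dot (P j) b).
Proof.
rewrite dotE /lincomb.
under eq_bigr => i _ do rewrite sumIE Rmult_comm -sum_scal.
rewrite exchange_big /=; apply: eq_bigr => j _.
rewrite dotE -sum_scal; apply: eq_bigr => i _; ring.
Qed.

Lemma dot_ge0 n (a : vec n) : 0 <= dot a a.
Proof. rewrite dotE; apply: sum_ge0 => i; nra. Qed.

Lemma norm_ge0 n (a : vec n) : 0 <= norm a.
Proof. exact: sqrt_pos. Qed.

Lemma norm_sq n (a : vec n) : norm a * norm a = dot a a.
Proof. by rewrite /norm sqrt_sqrt //; apply: dot_ge0. Qed.

Lemma le_norm_of_sq n (a : vec n) r : 0 <= r -> dot a a <= r * r -> norm a <= r.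
Proof.
move=> r0 H; have := norm_ge0 a; have := norm_sq a; nra.
Qed.


Lemma coord_le_norm n (a : vec n) i : Rabs (a i) <= norm a.
Proof.
have h0 := norm_ge0 a.
have : a i * a i <= norm a * norm a.
  rewrite norm_sq dotE (sum_pick _ i).
  have : 0 <= \big[Rplus/0]_(i0 < n) (if i0 == i then 0 else a i0 * a i0).
    by apply: sum_ge0 => j; case: ifP => _; nra.
  lra.
move=> h; apply: Rabs_le; split; nra.
Qed.

Lemma dot_sub_r n (a b c : vec n) : dot c (vsub a b) = dot c a - dot c b.
Proof. by rewrite dotC dot_sub (dotC a) (dotC b). Qed.
Lemma dot_scale_r n r (a c : vec n) : dot c (vscale r a) = r * dot c a.
Proof. by rewrite dotC dot_scale dotC. Qed.
Lemma dot_add_r n (a b c : vec n) : dot c (vadd a b) = dot c a + dot c b.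
Proof. by rewrite dotC dot_add (dotC a) (dotC b). Qed.

Lemma dot_unit_le n (a u : vec n) : dot u u = 1 -> Rabs (dot a u) <= norm a.
Proof.
move=> hu; set t := dot a u.
have h := dot_ge0 (vsub a (vscale t u)).
rewrite dot_sub !dot_sub_r !dot_scale !dot_scale_r hu (dotC u a) -/t in h.
have h0 := norm_ge0 a; have h1 := norm_sq a.
apply: Rabs_le; split; nra.
Qed.

Lemma norm_scale n r (a : vec n) : norm (vscale r a) = Rabs r * norm a.
Proof.
rewrite /norm dot_scale dot_scale_r -Rmult_assoc sqrt_mult_alt; last nra.
by rewrite -/(Rsqr r) sqrt_Rsqr_abs.
Qed.

Lemma dot_bound n (b a : vec n) : Rabs (dot b a) <= sumI (fun i => Rabs (b i)) * norm a.
Proof.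
rewrite dotE sumIE; apply: Rle_trans (sum_abs _) _.
rewrite Rmult_comm -sum_scal; apply: sum_le => i.
rewrite Rabs_mult; have := coord_le_norm a i; have := Rabs_pos (b i); nra.
Qed.

Lemma dot_lincomb_r n m (c : 'I_m -> R) (P : 'I_m -> vec n) b :
  dot b (lincomb c P) = \big[Rplus/0]_(j < m) (c j * dot b (P j)).
Proof. rewrite dotC dot_lincomb; apply: eq_bigr => j _; by rewrite dotC. Qed.

Lemma dot_lincomb_u n k (u : 'I_k -> vec n) (c : 'I_k -> R) l :
  orthonormal u -> dot (lincomb c u) (u l) = c l.
Proof.
move=> hu; rewrite dot_lincomb (sum_pick _ l) hu eqxx sum_zero; first ring.
by move=> j; case: ifP => // h; rewrite hu h; ring.
Qed.

Lemma vec_ext n (a b : vec n) : (forall i, a i = b i) -> a = b.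
Proof. move=> h; exact: functional_extensionality. Qed.

Lemma dot_proj n k (u : 'I_k -> vec n) m y j : orthonormal u ->
  dot (proj u m y) (u j) = if ltn j m then dot y (u j) else 0.
Proof. move=> hu; by rewrite /proj dot_lincomb_u. Qed.

Lemma proj_S n k (u : 'I_k -> vec n) (l : 'I_k) y :
  proj u l.+1 y = vadd (proj u l y) (vscale (dot y (u l)) (u l)).
Proof.
apply: vec_ext => i; rewrite /proj /vadd /vscale /lincomb !sumIE.
rewrite (sum_pick _ l) [in RHS](sum_pick _ l) /ltn /= ltnn ltnSn.
rewrite Rmult_0_l Rplus_0_l Rplus_comm; congr Rplus.
apply: eq_bigr => j _; case: ifP => // /negbT hj.
by rewrite ltnS leq_eqVlt (_ : (nat_of_ord j == l) = false) //; apply/negbTE.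
Qed.

Lemma eventually_ord k (P : 'I_k -> nat -> Prop) :
  (forall l, exists N, forall i, (N <= i)%nat -> P l i) ->
  exists N, forall i, (N <= i)%nat -> forall l, P l i.
Proof.
move=> H.
suff : forall s : seq 'I_k, exists N, forall i, (N <= i)%nat -> forall l, l \in s -> P l i.
  by case/(_ (enum 'I_k)) => N HN; exists N => i hi l; apply: HN => //; rewrite mem_enum.
elim=> [|a s [N HN]]; first by exists 0%nat.
have [M HM] := H a.
exists (maxn N M) => i; rewrite geq_max => /andP[h1 h2] l; rewrite inE => /orP[/eqP->|hl].
  exact: HM. exact: HN.
Qed.

Lemma dot0_vec n (a : vec n) : dot a a = 0 -> a = @vzero n.
Proof.
move=> h; apply: vec_ext => i; rewrite /vzero.
have := coord_le_norm a i; rewrite /norm h sqrt_0 => h2.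
rewrite /Rabs in h2; case: Rcase_abs h2 => ? ?; lra.
Qed.

Lemma orth_unit n k (u : 'I_k -> vec n) l : orthonormal u -> dot (u l) (u l) = 1.
Proof. by move=> hu; rewrite hu eqxx. Qed.

Lemma dot_sub_scale n (w u : vec n) c : dot u u = 1 ->
  dot (vsub w (vscale c u)) (vsub w (vscale c u)) = dot w w - 2*c*dot w u + c*c.
Proof.
move=> hu; rewrite dot_sub !dot_sub_r !dot_scale !dot_scale_r hu (dotC u w); ring.
Qed.

Lemma FE_one n k (u : 'I_k -> vec n) (v : nat -> vec n) (l : 'I_k) :
  orthonormal u -> (forall i, ~ in_span u (v i)) ->
  vconv (fun i => normalize (vsub (v i) (proj u l (v i)))) (u l) ->
  forall eps, 0 < eps -> exists N, forall i, (N <= i)%nat ->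
   0 < dot (v i) (u l) /\ dot (v i) (u l) <= norm (vsub (v i) (proj u l (v i))) /\
   norm (vsub (v i) (proj u l.+1 (v i))) <= eps * dot (v i) (u l).
Proof.
move=> hu hsp hcv eps heps.
set eta := Rmin (1/2) (eps*eps/8).
have heta : 0 < eta by apply: Rmin_pos; nra.
have eta1 : eta <= 1/2 by apply: Rmin_l.
have eta2 : eta <= eps*eps/8 by apply: Rmin_r.
have [N HN] := hcv eta heta.
exists N => i /leP hi; have := HN i hi; rewrite /R_dist Rminus_0_r Rabs_pos_eq; last exact: norm_ge0.
move=> hlt.
set y := v i. set w := vsub y (proj u l y). set c := dot y (u l). set Nl := norm w.
have hul := orth_unit l hu.
have hwu : dot w (u l) = c.
  by rewrite /w dot_sub dot_proj // /ltn /= ltnn Rminus_0_r.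
have hNl : 0 < Nl.
  have h0 := dot_ge0 w.
  case: (Req_dec (dot w w) 0) => hw.
    exfalso; apply: (hsp i); exists (fun j : 'I_k => if ltn j l then dot y (u j) else 0).
    have := dot0_vec hw => /(congr1 (fun z => vadd z (proj u l y))) => e.
    rewrite -[v i]/y; apply: vec_ext => t.
    have := congr1 (fun z => z t) e; rewrite /vadd /w /vsub /vzero /proj /= => h; lra.
  rewrite /Nl /norm; apply: sqrt_lt_R0; lra.
have hNsq := norm_sq w; rewrite -/Nl in hNsq.
have hde : dot (vsub (normalize w) (u l)) (u l) = / Nl * c - 1.
  by rewrite dot_sub /normalize dot_scale hwu hul -/Nl.
have habs := dot_unit_le (vsub (normalize w) (u l)) hul.
rewrite hde in habs.
have hw' : vsub y (proj u l.+1 y) = vsub w (vscale c (u l)).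
  rewrite proj_S; apply: vec_ext => t; rewrite /w /c /vsub /vadd /vscale; ring.
have hdw' : dot (vsub w (vscale c (u l))) (vsub w (vscale c (u l))) = Nl * Nl - c * c.
  by rewrite dot_sub_scale // hwu hNsq; ring.
have ht : Rabs (/ Nl * c - 1) < eta by apply: Rle_lt_trans habs hlt.
have [t tdef] : exists t, t = / Nl * c by eauto.
rewrite -tdef in ht.
have hc : c = t * Nl by rewrite tdef; field; lra.
have ht1 : 1 - eta < t.
  move: ht; rewrite /Rabs; case: Rcase_abs => h1 h2; lra.
have h0' := dot_ge0 (vsub w (vscale c (u l))).
rewrite hdw' in h0'.
have tpos : 0 < t by lra.
have cpos : 0 < c by rewrite hc; nra.
split; first exact: cpos.
split.
  rewrite -/Nl; nra.
rewrite hw'; apply: le_norm_of_sq; first nra.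
rewrite hdw' hc.
have e1 : 0 <= Nl*Nl*(1-t*t) by rewrite hc in h0'; lra.
have e2 : 0 <= 1 - t*t.
  apply: (Rmult_le_reg_l (Nl*Nl)); first nra. lra.
have t1 : t <= 1 by nra.
have : Nl * Nl * (1 - t * t) <= Nl * Nl * (2 * eta) by apply: Rmult_le_compat_l; nra.
have : eps * eps * (Nl * Nl) / 4 <= eps * eps * (t * t) * (Nl * Nl).
  have : 1/4 <= t * t by nra.
  move=> ?; have : 0 <= eps * eps * (Nl * Nl) by nra. nra.
nra.
Qed.

Lemma lincombE n m (c : 'I_m -> R) (P : 'I_m -> vec n) t :
  lincomb c P t = \big[Rplus/0]_(j < m) (c j * P j t).
Proof. by rewrite /lincomb sumIE. Qed.

Lemma lincomb_lincomb n m p (mu : 'I_m -> R) (be : 'I_m -> 'I_p -> R) (V : 'I_p -> vec n) :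
  lincomb mu (fun j => lincomb (be j) V) =
  lincomb (fun t => \big[Rplus/0]_(j < m) (mu j * be j t)) V.
Proof.
apply: vec_ext => i; rewrite !lincombE.
under eq_bigr => j _ do rewrite lincombE -sum_scal.
rewrite exchange_big /=; apply: eq_bigr => t _.
rewrite Rmult_comm -sum_scal; apply: eq_bigr => j _; ring.
Qed.

Lemma sumI_comb m p (mu : 'I_m -> R) (be : 'I_m -> 'I_p -> R) :
  sumI (fun t => \big[Rplus/0]_(j < m) (mu j * be j t)) =
  \big[Rplus/0]_(j < m) (mu j * sumI (be j)).
Proof.
rewrite sumIE exchange_big /=; apply: eq_bigr => j _; by rewrite sumIE sum_scal.
Qed.

Lemma sum_nonneg_zero m (F : 'I_m -> R) j : (forall i, 0 <= F i) ->
  \big[Rplus/0]_(i < m) F i = 0 -> F j = 0.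
Proof.
move=> h0 hs; rewrite (sum_pick _ j) in hs.
have : 0 <= \big[Rplus/0]_(i < m) (if i == j then 0 else F i).
  by apply: sum_ge0 => i; case: ifP => _; [lra | apply: h0].
have := h0 j; lra.
Qed.

Lemma conv_comb n m d (A : 'I_d -> bool) (V : 'I_d -> vec n) (P : 'I_m -> vec n) (mu : 'I_m -> R) :
  (forall j, 0 <= mu j) -> sumI mu = 1 -> (forall j, conv_on A V (P j)) ->
  conv_on A V (lincomb mu P).
Proof.
move=> hmu hs hP.
have [be hbe] : exists be : 'I_m -> 'I_d -> R, forall j,
   (forall t, 0 <= be j t) /\ (forall t, A t = false -> be j t = 0) /\
   sumI (be j) = 1 /\ P j = lincomb (be j) V.
  exists (fun j => proj1_sig (constructive_indefinite_description _ (hP j))).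
  by move=> j; case: (constructive_indefinite_description _ (hP j)).
exists (fun t => \big[Rplus/0]_(j < m) (mu j * be j t)); split; [|split; [|split]].
- move=> t; apply: sum_ge0 => j; have := hmu j; have := (hbe j).1 t; nra.
- move=> t ht; apply: sum_zero => j; rewrite ((hbe j).2.1 t ht); ring.
- rewrite sumI_comb -hs sumIE; apply: eq_bigr => j _; rewrite (hbe j).2.2.1; ring.
- rewrite -lincomb_lincomb; congr lincomb; apply: functional_extensionality => j.
  exact: (hbe j).2.2.2.
Qed.

Lemma extreme n m d (A : 'I_d -> bool) (V : 'I_d -> vec n) (P : 'I_m -> vec n) (mu : 'I_m -> R) j0 :
  aff_indep V ->
  (forall j, 0 <= mu j) -> sumI mu = 1 -> (forall j, conv V (P j)) ->
  conv_on A V (lincomb mu P) -> 0 < mu j0 -> conv_on A V (P j0).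
Proof.
move=> hV hmu hs hP [ga [hga0 [hgaA [hgas hgae]]]] hj0.
have [be hbe] : exists be : 'I_m -> 'I_d -> R, forall j,
   (forall t, 0 <= be j t) /\
   sumI (be j) = 1 /\ P j = lincomb (be j) V.
  exists (fun j => proj1_sig (constructive_indefinite_description _ (hP j))).
  move=> j; case: (constructive_indefinite_description _ (hP j)) => b [? [_ [? ?]]] /=; by [].
set ga' := fun t => \big[Rplus/0]_(j < m) (mu j * be j t).
have e1 : lincomb mu P = lincomb ga' V.
  rewrite /ga' -lincomb_lincomb; congr lincomb; apply: functional_extensionality => j.
  exact: (hbe j).2.2.
have hsum' : sumI ga' = 1.
  rewrite /ga' sumI_comb -hs sumIE; apply: eq_bigr => j _; rewrite (hbe j).2.1; ring.
have heq : forall t, ga' t - ga t = 0.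
  apply: hV.
  - rewrite sumIE (eq_bigr (fun t => ga' t + (-1) * ga t)); last by move=> t _; ring.
    rewrite sum_add sum_scal -!sumIE; lra.
  - apply: vec_ext => i; rewrite /vzero lincombE.
    have := congr1 (fun z => z i) hgae; have := congr1 (fun z => z i) e1.
    rewrite !lincombE => h1 h2.
    rewrite (eq_bigr (fun t => ga' t * V t i + (-1) * (ga t * V t i))); last by move=> t _; ring.
    rewrite sum_add sum_scal; lra.
exists (be j0); split; [exact: (hbe j0).1|split; [|split; [exact: (hbe j0).2.1|exact: (hbe j0).2.2]]].
move=> t ht.
have h0 : ga' t = 0 by have := heq t; rewrite (hgaA t ht); lra.
have h : mu j0 * be j0 t = 0.
  apply: (@sum_nonneg_zero _ (fun j => mu j * be j t) j0) => //.
  by move=> j; have := hmu j; have := (hbe j).1 t; nra.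
by case: (Rmult_integral _ _ h) => // ?; lra.
Qed.

Lemma tele_all (T : nat -> R) m :
  \big[Rplus/0]_(j < m) (T j - T j.+1) = T 0%nat - T m.
Proof.
elim: m => [|m IH]; first by rewrite big_ord0; ring.
rewrite big_ord_recr /= IH; ring.
Qed.

Lemma tele_from (T : nat -> R) a d :
  \big[Rplus/0]_(j < (a + d).+1) (if (a < j)%nat then T j - T j.+1 else 0) = T a.+1 - T (a + d).+1.
Proof.
elim: d => [|d IH].
  rewrite addn0 sum_zero; first ring.
  move=> j; case: ifP => // h; have := ltn_ord j; rewrite ltnS => h2.
  by exfalso; move: h; rewrite ltnNge h2.
rewrite addnS big_ord_recr /= IH; rewrite (_ : (a < (a + d).+1)%nat = true); first ring.
by rewrite ltnS leq_addr.
Qed.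

Lemma tele_from' (T : nat -> R) a m : (a < m)%nat ->
  \big[Rplus/0]_(j < m) (if (a < j)%nat then T j - T j.+1 else 0) = T a.+1 - T m.
Proof. move=> h; rewrite -(subnKC h) addSn; exact: tele_from. Qed.

Definition Tf (sN : nat -> R) (j : nat) : R := match j with O => 1 | S j' => sN j' end.

Lemma C_mem n K (x : vec n) (u : 'I_K.+1 -> vec n) (lam : 'I_K.+1 -> R) (sN : nat -> R) :
  (forall l, 0 <= sN l) -> sN 0%nat <= 1 -> (forall l, sN l.+1 <= sN l) -> sN K.+1 = 0 ->
  let mu := fun j : 'I_K.+2 => Tf sN j - Tf sN j.+1 in
  (forall j, 0 <= mu j) /\ sumI mu = 1 /\
  lincomb mu (Cpts x u lam) = vadd x (lincomb (fun l => sN l * lam l) u).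
Proof.
move=> h0 h1 hdec hK mu; split; [|split].
- by case=> [[|j] hj]; rewrite /mu /=; [lra | have := hdec j; lra].
- rewrite sumIE /mu (tele_all (Tf sN) K.+2) /= hK; ring.
apply: vec_ext => t; rewrite lincombE /vadd lincombE.
rewrite (eq_bigr (fun j => mu j * x t + \big[Rplus/0]_(l < K.+1)
                   ((if ltn l j then mu j else 0) * (lam l * u l t)))); last first.
  move=> j _; rewrite /Cpts /vadd lincombE Rmult_plus_distr_l -sum_scal; congr Rplus.
  by apply: eq_bigr => l _; case: ifP => _; ring.
rewrite sum_add exchange_big /= (eq_bigr (fun j => x t * mu j)); last by move=> j _; ring.
rewrite sum_scal.
have -> : \big[Rplus/0]_(j < K.+2) mu j = 1 by rewrite /mu (tele_all (Tf sN) K.+2) /= hK; ring.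
rewrite Rmult_1_r; congr Rplus; apply: eq_bigr => l _.
rewrite (eq_bigr (fun i : 'I_K.+2 => (lam l * u l t) * (if (l < i)%nat then Tf sN i - Tf sN i.+1 else 0))); last first.
  by move=> i _; rewrite /mu; case: ifP => _; ring.
rewrite sum_scal tele_from' /=; last by rewrite ltnS ltnW.
rewrite hK; ring.
Qed.

Definition clamp (s : R) := Rmax 0 (Rmin 1 s).

Lemma clamp_in s : 0 <= clamp s <= 1.
Proof. rewrite /clamp /Rmax /Rmin; repeat destruct Rle_dec; lra. Qed.

Lemma clamp_lip s y : Rabs (clamp y - clamp s) <= Rabs (y - s).
Proof.
rewrite /clamp /Rmax /Rmin; repeat destruct Rle_dec;
rewrite /Rabs; repeat destruct Rcase_abs; lra.
Qed.

Lemma clamp_id s : 0 <= s <= 1 -> clamp s = s.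
Proof. move=> h; rewrite /clamp /Rmax /Rmin; repeat destruct Rle_dec; lra. Qed.

Definition cont01 (h : R -> R) := forall s, 0 <= s <= 1 -> forall e, 0 < e ->
  exists del, 0 < del /\ forall s', 0 <= s' <= 1 -> Rabs (s' - s) < del -> Rabs (h s' - h s) < e.

Lemma gap (h : R -> R) a b : a < b -> cont01 h ->
  (forall s, 0 <= s <= 1 -> h s <= a \/ b <= h s) -> h 0 <= a -> h 1 <= a.
Proof.
move=> hab hc hd h0.
case: (Rle_lt_dec (h 1) a) => // h1.
have h1b : b <= h 1 by case: (hd 1) => //; lra.
set hc' := fun s => h (clamp s) - (a + b) / 2.
have cont : continuity hc'.
  move=> s; rewrite /continuity_pt /continue_in /limit1_in /limit_in /= /R_dist => e he.
  have [del [hdel H]] := hc (clamp s) (clamp_in s) e he.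
  exists del; split => // y [_ hy].
  rewrite /hc'.
  have := H (clamp y) (clamp_in y) (Rle_lt_trans _ _ _ (clamp_lip s y) hy).
  by have -> : h (clamp y) - (a+b)/2 - (h (clamp s) - (a+b)/2) = h (clamp y) - h (clamp s) by ring.
have c0 : hc' 0 < 0 by rewrite /hc' clamp_id; lra.
have c1 : 0 < hc' 1 by rewrite /hc' clamp_id; lra.
have [z [hz hz0]] := IVT hc' 0 1 cont Rlt_0_1 c0 c1.
move: hz0; rewrite /hc' clamp_id // => e.
case: (hd z hz); lra.
Qed.

Lemma seg_cube n (P D : vec n) : inCube P -> inCube (vadd P D) ->
  forall s, 0 <= s <= 1 -> inCube (vadd P (vscale s D)).
Proof.
move=> h1 h2 s hs i; have := h1 i; have := h2 i; rewrite /vadd /vscale; nra.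
Qed.

Lemma seg_cont n (f : vec n -> R) (P D : vec n) :
  (forall x, inCube x -> forall eps, 0 < eps -> exists delta, 0 < delta /\
     forall y, inCube y -> norm (vsub y x) < delta -> Rabs (f y - f x) < eps) ->
  (forall s, 0 <= s <= 1 -> inCube (vadd P (vscale s D))) ->
  cont01 (fun s => f (vadd P (vscale s D))).
Proof.
move=> hc hcube s hs e he.
have [del [hdel H]] := hc _ (hcube s hs) e he.
have hN := norm_ge0 D.
exists (del / (norm D + 1)); split; first by apply: Rdiv_lt_0_compat; lra.
move=> s' hs' hss; apply: H; first exact: hcube.
have -> : vsub (vadd P (vscale s' D)) (vadd P (vscale s D)) = vscale (s' - s) D.
  by apply: vec_ext => i; rewrite /vsub /vadd /vscale; ring.
rewrite norm_scale.
have h1 : Rabs (s' - s) * (norm D + 1) < del.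
  have := Rmult_lt_compat_r (norm D + 1) _ _ ltac:(lra) hss.
  by rewrite /Rdiv Rmult_assoc Rinv_l; lra.
have := Rabs_pos (s' - s); nra.
Qed.

Definition coef n (p : ('I_n -> Z) * Z) : vec n := fun i => IZR (p.1 i).

Lemma aff_add n p (y w : vec n) : aff_eval p (vadd y w) = aff_eval p y + dot (coef p) w.
Proof.
rewrite /aff_eval -/(dot (coef p) y) -/(dot (coef p) (vadd y w)).
rewrite dot_add_r; ring.
Qed.

Lemma ex_min_ord k (P : 'I_k -> Prop) : (exists l, P l) ->
  exists l, P l /\ forall l' : 'I_k, (l' < l)%nat -> ~ P l'.
Proof.
move=> [l0 hl0]; apply: NNPP => hno.
suff : forall N, forall l : 'I_k, (l < N)%nat -> ~ P l.
  by move=> /(_ l0.+1 l0 (ltnSn _)).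
elim=> [|N IH] l hl //.
rewrite ltnS leq_eqVlt in hl; case/orP: hl => [/eqP e|hl]; last exact: IH.
move=> hPl; apply: hno; exists l; split => // l' hl'; apply: IH; by rewrite -e.
Qed.

Lemma unit_norm n k (u : 'I_k -> vec n) l : orthonormal u -> norm (u l) = 1.
Proof. by move=> hu; rewrite /norm orth_unit // sqrt_1. Qed.

Lemma tri3 a b c : Rabs a <= Rabs (a + b + c) + Rabs b + Rabs c.
Proof.
have := Rabs_triang (a + b + c) (- b - c).
rewrite (_ : a + b + c + (- b - c) = a); last ring.
have := Rabs_triang (- b) (- c).
rewrite /Rminus !Rabs_Ropp; lra.
Qed.

Lemma piece_est n K (u : 'I_K.+1 -> vec n) (v : vec n) (eps A ka de : R) (a : vec n) (P0 : R)
  (m : nat) (mo : 'I_K.+1) (t : R) :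
  orthonormal u ->
  (forall l, 0 < dot v (u l)) ->
  (forall p l : 'I_K.+1, (p < l)%nat -> dot v (u l) <= eps * dot v (u p)) ->
  (forall l, dot v (u l) <= eps) ->
  0 < eps -> eps <= 1 -> 0 <= A -> 0 < ka ->
  (forall w, Rabs (dot a w) <= A * norm w) ->
  (forall l, dot a (u l) <> 0 -> ka <= Rabs (dot a (u l))) ->
  (P0 <> 0 -> de <= Rabs P0) ->
  INR K.+1 * A * eps + A * eps <= ka / 2 ->
  INR K.+1 * A * eps + A * eps + ka * eps <= de ->
  mo.+1 = m -> Rabs t <= A * eps * dot v (u mo) ->
  Rabs (P0 + \big[Rplus/0]_(l < K.+1) ((if ltn l m then dot v (u l) else 0) * dot a (u l)) + t)
     <= Rabs t \/
  ka * dot v (u mo) / 2 <=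
  Rabs (P0 + \big[Rplus/0]_(l < K.+1) ((if ltn l m then dot v (u l) else 0) * dot a (u l)) + t).
Proof.
move=> hu cpos ctail cle he he1 hA hka hphi hkap hde c1 c2 hm ht.
set g := fun l : 'I_K.+1 => (if ltn l m then dot v (u l) else 0) * dot a (u l).
have gdef : \big[Rplus/0]_(l < K.+1) ((if ltn l m then dot v (u l) else 0) * dot a (u l)) =
  \big[Rplus/0]_(l < K.+1) g l by [].
rewrite gdef.
have phiu : forall l, Rabs (dot a (u l)) <= A.
  by move=> l; have := hphi (u l); rewrite unit_norm //; lra.
have hINR : 0 <= INR K.+1 by apply: pos_INR.
have cmo := cpos mo.
have cmole : dot v (u mo) <= eps by apply: cle.
have gb : forall l, Rabs (g l) <= eps * A.
  move=> l; rewrite /g; case: ifP => _; last by rewrite Rmult_0_l Rabs_R0; nra.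
  rewrite Rabs_mult Rabs_pos_eq; last by have := cpos l; lra.
  have := cle l; have := phiu l; have := cpos l; have := Rabs_pos (dot a (u l)); nra.
case: (classic (P0 = 0)) => hP0; last first.
  right.
  have hsum : Rabs (\big[Rplus/0]_(l < K.+1) g l) <= INR K.+1 * (eps * A).
    apply: Rle_trans (sum_abs _) _; apply: sum_const_le => l; exact: gb.
  have := hde hP0.
  have ht' : Rabs t <= A * eps by have := Rabs_pos t; nra.
  move=> hd.
  have tri := tri3 P0 (\big[Rplus/0]_(l < K.+1) g l) t.
  have : ka * dot v (u mo) <= ka * eps by apply: Rmult_le_compat_l; lra.
  have := Rmult_lt_0_compat _ _ hka cmo. move=> *; lra.
case: (classic (exists l : 'I_K.+1, (l < m)%nat /\ dot a (u l) <> 0)) => hex; last first.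
  left; right; f_equal; rewrite hP0 (@sum_zero _ g); first ring.
  move=> l; rewrite /g; case: ifP => hl; last ring.
  case: (Req_dec (dot a (u l)) 0) => [->|hne]; first ring.
  by exfalso; apply: hex; exists l.
right.
have [p0 [[hp0m hp0ne] hmin]] := ex_min_ord hex.
have cp0 := cpos p0.
have hmo : dot v (u mo) <= dot v (u p0).
  have : (p0 <= mo)%nat by rewrite -ltnS hm.
  rewrite leq_eqVlt; case/orP => [/eqP e|hlt].
    have -> : mo = p0 by apply: val_inj. lra.
  have := ctail p0 mo hlt; nra.
have hrest : Rabs (\big[Rplus/0]_(l < K.+1) (if l == p0 then 0 else g l)) <= INR K.+1 * (eps * dot v (u p0) * A).
  apply: Rle_trans (sum_abs _) _; apply: sum_const_le => l.
  have hpos : 0 <= eps * dot v (u p0) * A by apply: Rmult_le_pos; [apply: Rmult_le_pos|]; lra.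
  case: ifP => hl; first by rewrite Rabs_R0.
  rewrite /g; case: ifP => hlm; last by rewrite Rmult_0_l Rabs_R0.
  case: (ltngtP l p0) => hlp.
  - have -> : dot a (u l) = 0 by apply: NNPP => hne; exact: (hmin l hlp (conj hlm hne)).
    by rewrite Rmult_0_r Rabs_R0.
  - rewrite Rabs_mult Rabs_pos_eq; last by have := cpos l; lra.
    have := ctail p0 l hlp; have := phiu l; have := cpos l; have := Rabs_pos (dot a (u l)); nra.
  - by exfalso; move: hl; rewrite (_ : l = p0) ?eqxx //; apply: val_inj.
have hg0 : g p0 = dot v (u p0) * dot a (u p0) by rewrite /g (_ : ltn p0 m = true).
have hk := hkap p0 hp0ne.
rewrite hP0 Rplus_0_l (sum_pick _ p0) hg0.
have hx : Rabs (dot v (u p0) * dot a (u p0)) = dot v (u p0) * Rabs (dot a (u p0)).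
  by rewrite Rabs_mult Rabs_pos_eq //; lra.
set S := \big[Rplus/0]_(l < K.+1) (if l == p0 then 0 else g l).
have tri := tri3 (dot v (u p0) * dot a (u p0)) S t.
have hAe : 0 <= A * eps by apply: Rmult_le_pos; lra.
have ht2 : Rabs t <= A * eps * dot v (u p0).
  apply: Rle_trans ht _; apply: Rmult_le_compat_l => //.
rewrite hx in tri.
have h1 : ka * dot v (u p0) <= dot v (u p0) * Rabs (dot a (u p0)).
  rewrite Rmult_comm; apply: Rmult_le_compat_l; lra.
have h2 : INR K.+1 * (eps * dot v (u p0) * A) + A * eps * dot v (u p0) <= ka / 2 * dot v (u p0).
  have := Rmult_le_compat_r (dot v (u p0)) _ _ ltac:(lra) c1. lra.
have h3 : ka * dot v (u mo) <= ka * dot v (u p0) by apply: Rmult_le_compat_l; lra.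
have hS : Rabs S <= INR K.+1 * (eps * dot v (u p0) * A) := hrest.
lra.
Qed.

Lemma fin_lb (T : Type) (L : list T) (h : T -> R) (P : T -> Prop) :
  (forall t, List.In t L -> P t -> 0 < h t) ->
  exists ka, 0 < ka /\ forall t, List.In t L -> P t -> ka <= h t.
Proof.
elim: L => [|a L IH] H; first by exists 1; split => //; lra.
have [ka [hka Hk]] := IH (fun t ht => H t (or_intror ht)).
case: (classic (P a)) => hPa.
  have ha := H a (or_introl erefl) hPa.
  exists (Rmin ka (h a)); split; first by apply: Rmin_pos.
  move=> t [<-|ht] hPt; first exact: Rmin_r.
  apply: Rle_trans (Rmin_l _ _) _; exact: Hk.
exists ka; split => // t [<-|ht] hPt //; exact: Hk.
Qed.

Lemma fin_ub (T : Type) (L : list T) (h : T -> R) :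
  exists B, 0 <= B /\ forall t, List.In t L -> h t <= B.
Proof.
elim: L => [|a L [B [hB HB]]]; first by exists 0; split => //; lra.
exists (Rmax B (h a)); split; first by apply: Rle_trans hB (Rmax_l _ _).
move=> t [<-|ht]; first exact: Rmax_r.
apply: Rle_trans (Rmax_l _ _); exact: HB.
Qed.

Lemma In_enum k (l : 'I_k) : List.In l (enum 'I_k).
Proof.
have : l \in enum 'I_k by rewrite mem_enum.
elim: (enum 'I_k) => //= a s IH; rewrite inE => /orP[/eqP->|/IH]; auto.
Qed.

Lemma gap_up (h : R -> R) a b : a < b -> cont01 h ->
  (forall s, 0 <= s <= 1 -> h s <= a \/ b <= h s) -> b <= h 0 -> b <= h 1.
Proof.
move=> hab hc hd h0.
have := @gap (fun s => - h s) (- b) (- a) ltac:(lra).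
have hc' : cont01 (fun s => - h s).
  move=> s hs e he; have [del [hdel H]] := hc s hs e he; exists del; split => // s' hs' hss.
  rewrite (_ : - h s' - - h s = - (h s' - h s)); last ring.
  by rewrite Rabs_Ropp; apply: H.
move=> /(_ hc') H.
have : - h 1 <= - b.
  apply: H; last lra.
  by move=> s hs; case: (hd s hs) => ?; [right|left]; lra.
lra.
Qed.

Lemma vertex_in_conv n m (P : 'I_m -> vec n) j : conv P (P j).
Proof.
exists (fun j' => if j' == j then 1 else 0); split; [|split; [|split]].
- by move=> j'; case: ifP => _; lra.
- by [].
- rewrite sumIE (sum_pick _ j) eqxx sum_zero; first ring.
  by move=> i; case: ifP => // h; rewrite h.
- apply: vec_ext => i; rewrite lincombE (sum_pick _ j) eqxx sum_zero; first ring.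
  by move=> i'; case: ifP => // h; rewrite h; ring.
Qed.

Lemma mvmul_le m a : 0 <= a -> mvmul m a <= INR m * a.
Proof.
move=> ha; elim: m => [|m IH]; first by rewrite /=; lra.
change (oplus (mvmul m a) a <= INR m.+1 * a); rewrite /oplus; apply: Rle_trans (Rmin_r _ _) _.
rewrite S_INR; lra.
Qed.

Lemma N_mono (N : nat -> R) K : (forall j, (j < K)%nat -> N j.+1 <= N j) ->
  forall a b, (a <= b)%nat -> (b <= K)%nat -> N b <= N a.
Proof.
move=> H a b hab; rewrite -(subnKC hab); elim: (b - a)%nat => [|d IH] hK.
  by rewrite addn0; lra.
rewrite addnS in hK *; apply: Rle_trans (H _ hK) _; apply: IH; exact: ltnW.
Qed.

Lemma choose_eps (K m : nat) (A ka de lmin lmax : R) :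
  0 <= A -> 0 < ka -> 0 < de -> 0 < lmin -> 0 < lmax ->
  exists eps, 0 < eps /\ eps <= 1 /\
    INR K.+1 * A * eps + A * eps <= ka / 2 /\
    INR K.+1 * A * eps + A * eps + ka * eps <= de /\
    eps <= lmin /\ eps * lmax <= lmin /\ INR m * A * eps <= ka / 4.
Proof.
move=> hA hka hde hl hL.
have hK := pos_INR K.+1; have hm := pos_INR m.
set E := (INR K.+1 + INR m + 1) * (A + 1).
have hE : 1 <= E by rewrite /E; nra.
set eps := Rmin (Rmin 1 (ka / (4 * E))) (Rmin (de / (E + ka)) (Rmin lmin (lmin / lmax))).
have e1 : eps <= 1 by apply: Rle_trans (Rmin_l _ _) (Rmin_l _ _).
have e2 : eps <= ka / (4 * E) by apply: Rle_trans (Rmin_l _ _) (Rmin_r _ _).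
have e3 : eps <= de / (E + ka) by apply: Rle_trans (Rmin_r _ _) (Rmin_l _ _).
have e4 : eps <= lmin.
  apply: Rle_trans (Rmin_r _ _) _; apply: Rle_trans (Rmin_r _ _) (Rmin_l _ _).
have e5 : eps <= lmin / lmax.
  apply: Rle_trans (Rmin_r _ _) _; apply: Rle_trans (Rmin_r _ _) (Rmin_r _ _).
have epos : 0 < eps.
  repeat apply: Rmin_pos; try lra; apply: Rdiv_lt_0_compat; lra.
have hEe : E * eps <= ka / 4.
  have := Rmult_le_compat_l E _ _ ltac:(lra) e2.
  rewrite (_ : E * (ka / (4 * E)) = ka / 4) //; field; lra.
have hEe2 : (E + ka) * eps <= de.
  have := Rmult_le_compat_l (E + ka) _ _ ltac:(lra) e3.
  rewrite (_ : (E + ka) * (de / (E + ka)) = de) //; field; lra.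
have hEe3 : eps * lmax <= lmin.
  have := Rmult_le_compat_r lmax _ _ ltac:(lra) e5.
  rewrite (_ : lmin / lmax * lmax = lmin) //; field; lra.
have hb1 : (INR K.+1 + 1) * A <= E by rewrite /E; nra.
have hb2 : INR m * A <= E by rewrite /E; nra.
have hb1' : (INR K.+1 + 1) * A * eps <= E * eps by apply: Rmult_le_compat_r; lra.
have hb2' : INR m * A * eps <= E * eps by apply: Rmult_le_compat_r; lra.
exists eps; do ! split => //; try lra.
Qed.

Lemma C_proj n K (x : vec n) (u : 'I_K.+1 -> vec n) (lam : 'I_K.+1 -> R) (v : vec n)
  (eps lmin lmax : R) (mm : nat) :
  (forall l, 0 < lam l) -> (forall l, lmin <= lam l) -> (forall l, lam l <= lmax) ->
  0 < eps -> eps <= lmin -> eps * lmax <= lmin ->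
  (forall l, 0 < dot v (u l)) -> (forall l, dot v (u l) <= eps) ->
  (forall p l : 'I_K.+1, (p < l)%nat -> dot v (u l) <= eps * dot v (u p)) ->
  (0 < mm)%nat -> (mm <= K.+1)%nat ->
  exists mu : 'I_K.+2 -> R, (forall j, 0 <= mu j) /\ sumI mu = 1 /\
    lincomb mu (Cpts x u lam) = vadd x (proj u mm v) /\
    (forall j : 'I_K.+2, nat_of_ord j = mm -> 0 < mu j).
Proof.
move=> hlam hlmin hlmax he hel hell cpos cle ctail hmm0 hmmK.
pose sN := fun j : nat => if (j < mm)%nat && (j < K.+1)%nat
                          then dot v (u (inord j)) / lam (inord j) else 0.
have s0 : forall j, 0 <= sN j.
  move=> j; rewrite /sN; case: ifP => _; last lra.
  apply: Rlt_le; apply: Rdiv_lt_0_compat; [exact: cpos| exact: hlam].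
have s1 : sN 0%nat <= 1.
  rewrite /sN; case: ifP => _; last lra.
  have := cle (inord 0); have := hlmin (inord 0); have := hlam (inord 0) => h1 h2 h3.
  apply: (Rmult_le_reg_r (lam (inord 0))) => //.
  rewrite (_ : dot v (u (inord 0)) / lam (inord 0) * lam (inord 0) = dot v (u (inord 0))); first lra.
  field; lra.
have sdec : forall j, sN j.+1 <= sN j.
  move=> j; rewrite {1}/sN; case: ifP => hj; last exact: s0.
  move/andP: hj => [hj1 hj2].
  rewrite /sN (_ : (j < mm)%nat && (j < K.+1)%nat = true); last first.
    by apply/andP; split; apply: ltnW.
  have hjK : (j < K.+1)%nat by apply: ltnW.
  have eJ : (inord j : 'I_K.+1) = Ordinal hjK by apply: val_inj; rewrite /= inordK.
  have eJ1 : (inord j.+1 : 'I_K.+1) = Ordinal hj2 by apply: val_inj; rewrite /= inordK.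
  rewrite eJ eJ1.
  have ht := ctail (Ordinal hjK) (Ordinal hj2) (ltnSn j).
  have l1 := hlam (Ordinal hjK); have l2 := hlam (Ordinal hj2).
  have := hlmax (Ordinal hjK); have := hlmin (Ordinal hj2).
  have := cpos (Ordinal hjK); have := cpos (Ordinal hj2).
  move=> p1 p2 m1 m2.
  set a := dot v (u (Ordinal hj2)) in ht p1 *. set b := dot v (u (Ordinal hjK)) in ht p2 *.
  set L1 := lam (Ordinal hjK) in l1 m2 *. set L2 := lam (Ordinal hj2) in l2 m1 *.
  have : a * L1 <= b * L2.
    have : eps * L1 <= L2 by nra.
    move=> h; have : a * L1 <= eps * b * L1 by apply: Rmult_le_compat_r; lra.
    nra.
  move=> h; rewrite /Rdiv; apply: (Rmult_le_reg_r (L1 * L2)); first nra.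
  have -> : a * / L2 * (L1 * L2) = a * L1 by field; lra.
  have -> : b * / L1 * (L1 * L2) = b * L2 by field; lra.
  exact: h.
have sK : sN K.+1 = 0 by rewrite /sN ltnn andbF.
have [hmu0 [hmus hmul]] := C_mem x u lam s0 s1 sdec sK.
exists (fun j : 'I_K.+2 => Tf sN j - Tf sN j.+1); split => //; split => //; split.
  rewrite hmul; congr vadd; rewrite /proj; congr lincomb; apply: functional_extensionality => l.
  rewrite /sN /ltn /= ltn_ord andbT inord_val; case: ifP => _; last ring.
  field; have := hlam l; lra.
move=> j hj.
have [mm' emm] : exists mm', mm = mm'.+1 by exists mm.-1; rewrite prednK.
have hmK : (mm' < K.+1)%nat by rewrite -emm.
rewrite hj emm /= /sN emm ltnSn ltnn hmK /=.
have e : (inord mm' : 'I_K.+1) = Ordinal hmK by apply: val_inj; rewrite /= inordK.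
rewrite e Rminus_0_r; apply: Rdiv_lt_0_compat; [exact: cpos | exact: hlam].
Qed.

Lemma aff_seg n k (u : 'I_k -> vec n) (x v dd : vec n) p mm s :
  aff_eval p (vadd (vadd x (proj u mm v)) (vscale s dd)) =
  aff_eval p x + \big[Rplus/0]_(l < k) ((if ltn l mm then dot v (u l) else 0) * dot (coef p) (u l))
  + s * dot (coef p) dd.
Proof.
rewrite !aff_add dot_scale_r /proj dot_lincomb_r; ring.
Qed.

Lemma piece_seg n K (u : 'I_K.+1 -> vec n) (x v dd : vec n) (eps B ka de : R) p
  (mm : nat) (mo : 'I_K.+1) (s : R) :
  orthonormal u ->
  (forall l, 0 < dot v (u l)) ->
  (forall p l : 'I_K.+1, (p < l)%nat -> dot v (u l) <= eps * dot v (u p)) ->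
  (forall l, dot v (u l) <= eps) ->
  0 < eps -> eps <= 1 -> 0 <= B -> 0 < ka ->
  (forall w, Rabs (dot (coef p) w) <= B * norm w) ->
  (forall l, dot (coef p) (u l) <> 0 -> ka <= Rabs (dot (coef p) (u l))) ->
  (aff_eval p x <> 0 -> de <= Rabs (aff_eval p x)) ->
  INR K.+1 * B * eps + B * eps <= ka / 2 ->
  INR K.+1 * B * eps + B * eps + ka * eps <= de ->
  mo.+1 = mm -> 0 <= s <= 1 -> norm dd <= eps * dot v (u mo) ->
  Rabs (aff_eval p (vadd (vadd x (proj u mm v)) (vscale s dd))) <= B * norm dd \/
  ka * dot v (u mo) / 2 <= Rabs (aff_eval p (vadd (vadd x (proj u mm v)) (vscale s dd))).
Proof.
move=> hu cpos ctail cle he he1 hB hka hphi hkap hde c1 c2 hm hs hdd.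
rewrite aff_seg.
have hN := norm_ge0 dd.
have ht1 : Rabs (s * dot (coef p) dd) <= B * norm dd.
  rewrite Rabs_mult Rabs_pos_eq; last lra.
  have := hphi dd; have := Rabs_pos (dot (coef p) dd); nra.
have ht : Rabs (s * dot (coef p) dd) <= B * eps * dot v (u mo).
  apply: Rle_trans ht1 _; rewrite Rmult_assoc; apply: Rmult_le_compat_l => //.
case: (piece_est hu cpos ctail cle he he1 hB hka hphi hkap hde c1 c2 hm ht) => h.
  left; lra.
by right.
Qed.

Lemma part2_lemma n K (X : vec n -> Prop) (x : vec n) (u : 'I_K.+1 -> vec n)
  (d : nat) (V : 'I_d.+1 -> vec n) (A : 'I_d.+1 -> bool) (lam : 'I_K.+1 -> R)
  (f g : vec n -> R) :
  vsubset X (@inCube n) ->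
  vclosed X ->
  k_tangent X u x ->
  rational_simplex V ->
  vsubset (conv V) (@inCube n) ->
  (forall l, 0 < lam l) ->
  vsubset (Cset x u lam) (conv V) ->
  ~ vsubset (Cset x u lam) (conv_on A V) ->
  (forall y, (conv_on A V y /\ X y) <-> (conv V y /\ X y)) ->
  McNaughton f -> McNaughton g ->
  (forall y, inCube y -> (f y = 0 <-> conv_on A V y)) ->
  (forall y, inCube y -> (g y = 0 <-> conv V y)) ->
  ~ in_principal X g f.
Proof.
move=> hXc hcl htan hsimp hScube hlam hCS hCF hFX hf hg hf0 hg0 [m [hm hle]].
have [hu [xs [hX [hconv [hspan hdir]]]]] := htan.
have xX : X x := hcl xs x hX hconv.
have hxc := hXc x xX.
have Cp0 : Cpts x u lam ord0 = x.
  apply: vec_ext => t; rewrite /Cpts /vadd lincombE sum_zero; first ring.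
  by move=> l; rewrite /ltn /=; ring.
have CinS : forall j, conv V (Cpts x u lam j) := fun j => hCS _ (vertex_in_conv (Cpts x u lam) j).
have xF : conv_on A V x.
  by have := proj2 (hFX x) (conj (eq_ind _ (fun z => conv V z) (CinS ord0) _ Cp0) xX) => -[].
have [j0 hj0] : exists j0, ~ conv_on A V (Cpts x u lam j0).
  apply: NNPP => hno; apply: hCF => y [c [hc0 [_ [hcs ->]]]].
  apply: conv_comb => // j; apply: NNPP => hj; apply: hno; by exists j.
have hj0pos : (0 < j0)%nat.
  rewrite lt0n; apply/negP => /eqP e; apply: hj0.
  by rewrite (_ : j0 = ord0) ?Cp0 //; apply: val_inj.
have hl : (j0.-1 < K.+1)%nat by rewrite -ltnS prednK.
set l0 := Ordinal hl.
have hj0l0 : nat_of_ord j0 = l0.+1 by rewrite /= prednK.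
have [_ [_ [psf hpsf]]] := hf.
have [_ [_ [psg hpsg]]] := hg.
set PS := (psf ++ psg)%list.
have [B [hB HB]] := fin_ub PS (fun p => sumI (fun i => Rabs (coef p i))).
have hphi : forall p, List.In p PS -> forall w, Rabs (dot (coef p) w) <= B * norm w.
  move=> p hp w; apply: Rle_trans (dot_bound _ _) _; apply: Rmult_le_compat_r; first exact: norm_ge0.
  exact: HB.
have [ka [hka Hka]] := @fin_lb _ (List.list_prod PS (enum 'I_K.+1))
   (fun pl => Rabs (dot (coef pl.1) (u pl.2))) (fun pl => dot (coef pl.1) (u pl.2) <> 0)
   (fun pl _ h => Rabs_pos_lt _ h).
have hkap : forall p, List.In p PS -> forall l, dot (coef p) (u l) <> 0 -> ka <= Rabs (dot (coef p) (u l)).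
  move=> p hp l h; exact: (Hka (p, l) (List.in_prod _ _ _ _ hp (In_enum l)) h).
have [de [hde Hde]] := @fin_lb _ PS (fun p => Rabs (aff_eval p x)) (fun p => aff_eval p x <> 0)
   (fun p _ h => Rabs_pos_lt _ h).
have [lmin [hlmin Hlmin]] := @fin_lb _ (enum 'I_K.+1) lam (fun _ => True) (fun l _ _ => hlam l).
have [lmax [hlmax Hlmax]] := fin_ub (enum 'I_K.+1) lam.
have hlmax' : 0 < lmax by have := Hlmax ord0 (In_enum _); have := hlam ord0; lra.
have [eps [he0 [he1 [c1 [c2 [c3 [c4 c5]]]]]]] := choose_eps K m hB hka hde hlmin hlmax'.
pose vs := fun i => vsub (xs i) x.
have [N1 HN1] := eventually_ord (fun l => FE_one hu hspan (hdir l) he0).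
have [N2 HN2] := hconv eps he0.
set i := maxn N1 N2.
have hFE := HN1 i (leq_maxl _ _).
have hnv : norm (vs i) <= eps.
  have := HN2 i (ssrnat.leP (leq_maxr N1 N2)); rewrite /R_dist Rminus_0_r Rabs_pos_eq; last exact: norm_ge0.
  rewrite /vs; lra.
have [v hv] : exists v, vsub (xs i) x = v by eauto.
rewrite /vs hv in hFE hnv.
have ev : forall t, v t = xs i t - x t by move=> t; rewrite -hv.
have cpos : forall l, 0 < dot v (u l) := fun l => (hFE l).1.
have cleN : forall l : 'I_K.+1, dot v (u l) <= norm (vsub v (proj u l v)) := fun l => (hFE l).2.1.
have Ntail : forall l : 'I_K.+1, norm (vsub v (proj u l.+1 v)) <= eps * dot v (u l) := fun l => (hFE l).2.2.
have cle : forall l, dot v (u l) <= eps.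
  move=> l; have := dot_unit_le v (orth_unit l hu); have := Rle_abs (dot v (u l)); lra.
have Hm : forall j, (j < K.+1)%nat -> norm (vsub v (proj u j.+1 v)) <= norm (vsub v (proj u j v)).
  move=> j hj; have := Ntail (Ordinal hj); have := cleN (Ordinal hj); have := cpos (Ordinal hj).
  rewrite /= => h1 h2 h3; nra.
have Nmono := N_mono Hm.
have ctail : forall p l : 'I_K.+1, (p < l)%nat -> dot v (u l) <= eps * dot v (u p).
  move=> p l hpl; have := cleN l; have := Nmono p.+1 l hpl (ltnW (ltn_ord l)); have := Ntail p; lra.
have hlmin' : forall l, lmin <= lam l := fun l => Hlmin l (In_enum l) I.
have hlmax2 : forall l, lam l <= lmax := fun l => Hlmax l (In_enum l).
have inF : forall p, List.In p psf -> List.In p PS := fun p h => List.in_or_app _ _ _ (or_introl h).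
have inG : forall p, List.In p psg -> List.In p PS := fun p h => List.in_or_app _ _ _ (or_intror h).
have hINR1 : 1 <= INR K.+1 by rewrite S_INR; have := pos_INR K; lra.
have hBe : B * eps <= ka / 4 by nra.
have norm0 : norm (@vzero n) = 0.
  by rewrite /norm dotE sum_zero ?sqrt_0 // => t; rewrite /vzero; ring.
have [mu [hmu0 [hmus [hmul hmupos]]]] :=
  @C_proj n K x u lam v eps lmin lmax l0.+1 hlam hlmin' hlmax2 he0 c3 c4 cpos cle ctail (ltn0Sn _) (ltn_ord l0).
have z1C : Cset x u lam (vadd x (proj u l0.+1 v)).
  exists mu; split => //; split => //; split => //.
have z1cube := hScube _ (hCS _ z1C).
have z1nF : ~ conv_on A V (vadd x (proj u l0.+1 v)).
  move=> h; apply: hj0.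
  apply: (@extreme _ _ _ A V (Cpts x u lam) mu j0 hsimp.2 hmu0 hmus CinS _ (hmupos j0 hj0l0)).
  by rewrite hmul.
have fz1 : 0 < f (vadd x (proj u l0.+1 v)).
  have := (proj1 hf) _ z1cube; case => h _; case: h => // h.
  by exfalso; apply: z1nF; apply/(hf0 _ z1cube).
have e0 : forall P, vadd P (vscale 0 (@vzero n)) = P.
  by move=> P; apply: vec_ext => t; rewrite /vadd /vscale /vzero; ring.
have fz1b : ka * dot v (u l0) / 2 <= f (vadd x (proj u l0.+1 v)).
  have [p [hp hfp]] := hpsf _ z1cube.
  have := @piece_seg n K u x v (@vzero n) eps B ka de p l0.+1 l0 0 hu cpos ctail cle he0 he1 hB hka
    (hphi p (inF p hp)) (hkap p (inF p hp)) (Hde p (inF p hp)) c1 c2 erefl ltac:(lra)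
    ltac:(rewrite norm0; have := cpos l0; nra).
  rewrite e0 -hfp norm0 Rabs_pos_eq; last lra.
  case=> // h; lra.
set dd := vsub v (proj u l0.+1 v).
have seg1 : vadd (vadd x (proj u l0.+1 v)) dd = xs i.
  by apply: vec_ext => t; rewrite /dd /vadd /vsub ev; ring.
have xic := hXc _ (hX i).
have segc := seg_cube z1cube (eq_ind_r (fun z => inCube z) xic seg1).
have fxs : ka * dot v (u l0) / 2 <= f (xs i).
  rewrite -seg1 -[vadd _ dd](_ : vadd (vadd x (proj u l0.+1 v)) (vscale 1 dd) = _); last first.
    by apply: vec_ext => t; rewrite /vadd /vscale; ring.
  apply: (@gap_up (fun s => f (vadd (vadd x (proj u l0.+1 v)) (vscale s dd))) (B * norm dd)).
  - have := Ntail l0; have := cpos l0; have := norm_ge0 dd; rewrite -/dd => h1 h2 h3.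
    have : B * norm dd <= B * (eps * dot v (u l0)) by apply: Rmult_le_compat_l.
    nra.
  - exact: seg_cont (proj1 (proj2 hf)) segc.
  - move=> s hs; have [p [hp hfp]] := hpsf _ (segc s hs).
    have hf0' := proj1 ((proj1 hf) _ (segc s hs)).
    rewrite /= hfp in hf0' *.
    have := @piece_seg n K u x v dd eps B ka de p l0.+1 l0 s hu cpos ctail cle he0 he1 hB hka
      (hphi p (inF p hp)) (hkap p (inF p hp)) (Hde p (inF p hp)) c1 c2 erefl hs (Ntail l0).
    rewrite Rabs_pos_eq; last exact: hf0'.
    by case=> h; [left|right].
  - by rewrite /= (_ : vadd (vadd x (proj u l0.+1 v)) (vscale 0 dd) = vadd x (proj u l0.+1 v)) //;
      apply: vec_ext => t; rewrite /vadd /vscale; ring.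
set kK : 'I_K.+1 := ord_max.
have [mu2 [hmu20 [hmu2s [hmu2l _]]]] :=
  @C_proj n K x u lam v eps lmin lmax K.+1 hlam hlmin' hlmax2 he0 c3 c4 cpos cle ctail (ltn0Sn _) (leqnn _).
have z2C : Cset x u lam (vadd x (proj u K.+1 v)).
  exists mu2; split => //; split => //; split => //.
have z2S := hCS _ z2C.
have z2cube := hScube _ z2S.
have gz2 : g (vadd x (proj u K.+1 v)) = 0 by apply/(hg0 _ z2cube).
set rr := vsub v (proj u K.+1 v).
have seg2 : vadd (vadd x (proj u K.+1 v)) rr = xs i.
  by apply: vec_ext => t; rewrite /rr /vadd /vsub ev; ring.
have segc2 := seg_cube z2cube (eq_ind_r (fun z => inCube z) xic seg2).
have hrr : norm rr <= eps * dot v (u kK) by exact: (Ntail kK).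
have gxs : g (xs i) <= B * norm rr.
  rewrite -seg2 -[vadd _ rr](_ : vadd (vadd x (proj u K.+1 v)) (vscale 1 rr) = _); last first.
    by apply: vec_ext => t; rewrite /vadd /vscale; ring.
  apply: (@gap (fun s => g (vadd (vadd x (proj u K.+1 v)) (vscale s rr))) (B * norm rr) (ka * dot v (u kK) / 2)).
  - have := cpos kK; have := norm_ge0 rr => h1 h2.
    have : B * norm rr <= B * (eps * dot v (u kK)) by apply: Rmult_le_compat_l.
    nra.
  - exact: seg_cont (proj1 (proj2 hg)) segc2.
  - move=> s hs; have [p [hp hgp]] := hpsg _ (segc2 s hs).
    have hg0' := proj1 ((proj1 hg) _ (segc2 s hs)).
    rewrite /= hgp in hg0' *.
    have := @piece_seg n K u x v rr eps B ka de p K.+1 kK s hu cpos ctail cle he0 he1 hB hka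
      (hphi p (inG p hp)) (hkap p (inG p hp)) (Hde p (inG p hp)) c1 c2 erefl hs hrr.
    rewrite Rabs_pos_eq; last exact: hg0'.
    by case=> h; [left|right].
  - rewrite /= (_ : vadd (vadd x (proj u K.+1 v)) (vscale 0 rr) = vadd x (proj u K.+1 v)); last first.
      by apply: vec_ext => t; rewrite /vadd /vscale; ring.
    rewrite gz2; have := norm_ge0 rr; nra.
have cK : dot v (u kK) <= dot v (u l0).
  case: (ltngtP l0 kK) => hlk.
  - have := ctail l0 kK hlk; have := cpos l0; nra.
  - by exfalso; move: hlk; rewrite ltnNge -ltnS ltn_ord.
  - have e : kK = l0 by apply: ord_inj; rewrite hlk.
    by rewrite e; lra.
have gge := proj1 ((proj1 hg) _ xic).
have fin := hle (xs i) (hX i).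
have := mvmul_le m gge.
have hm0 := pos_INR m.
have : INR m * g (xs i) <= INR m * (B * eps * dot v (u l0)).
  apply: Rmult_le_compat_l => //.
  apply: Rle_trans gxs _; rewrite Rmult_assoc; apply: Rmult_le_compat_l => //.
  have := cpos kK; have := cpos l0; nra.
have : INR m * (B * eps * dot v (u l0)) <= ka / 4 * dot v (u l0).
  have := Rmult_le_compat_r (dot v (u l0)) _ _ ltac:(have := cpos l0; lra) c5; lra.
have := cpos l0; have := Rmult_lt_0_compat _ _ hka (cpos l0).
lra.
Qed.

Theorem mainTheorem6 (n k : nat) (X : vec n -> Prop) (x : vec n) (u : 'I_k -> vec n)
  (d : nat) (V : 'I_d.+1 -> vec n) (A : 'I_d.+1 -> bool) (lam : 'I_k -> R)
  (f g : vec n -> R) :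
  ltn 0%nat k ->
  vsubset X (@inCube n) ->
  vclosed X ->
  k_tangent X u x ->
  rational_simplex V ->
  vsubset (conv V) (@inCube n) ->
  (exists j, A j = true) ->
  (forall l, 0 < lam l) ->
  vsubset (Cset x u lam) (conv V) ->
  ~ vsubset (Cset x u lam) (conv_on A V) ->
  (forall y, (conv_on A V y /\ X y) <-> (conv V y /\ X y)) ->
  McNaughton f -> McNaughton g ->
  (forall y, inCube y -> (f y = 0 <-> conv_on A V y)) ->
  (forall y, inCube y -> (g y = 0 <-> conv V y)) ->
  (forall y, X y -> (f y = 0 <-> g y = 0)) /\
  ~ in_principal X g f /\
  ~ strongly_semisimple X.
Proof.
move=> hk hXc hcl htan hsimp hScube hAne hlam hCS hCF hFX hf hg hf0 hg0.
have part1 : forall y, X y -> (f y = 0 <-> g y = 0).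
  move=> y hy; have hc := hXc y hy.
  split => h.
    apply/(hg0 y hc); apply: (proj1 (proj1 (hFX y) (conj (proj1 (hf0 y hc) h) hy))).
  apply/(hf0 y hc); apply: (proj1 (proj2 (hFX y) (conj (proj1 (hg0 y hc) h) hy))).
have part2 : ~ in_principal X g f.
  move: u lam hk htan hlam hCS hCF; case: k => [//|K] u lam _ htan hlam hCS hCF.
  exact: (part2_lemma hXc hcl htan hsimp hScube hlam hCS hCF hFX hf hg hf0 hg0).
split => //; split => //.
move=> hss; have [Y [hYX hY]] := hss g hg.
have hgY : forall y, Y y -> g y = 0.
  apply/(hY g hg); exists 1%nat; split => // y hy.
  have [h0 h1] := (proj1 hg) y (hXc y hy).
  rewrite /= /oplus Rplus_0_l Rmin_right //; lra.
apply: part2; apply/(hY f hf) => y hy; apply/(part1 y (hYX y hy)); exact: hgY.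
Qed.
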